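(* Let $\{x_k\}$ be generated by the Subgradient-InexP method with Polyak's stepsize rule, under the standing assumptions, and assume $\{x_k\}$ converges to a point $x_*\in\Omega^*$. Let $c>0$ satisfy $c\ge\|s_k\|$ for all $k=0,1,\dots$. Then for every $N\in\mathbb{N}$, $$\min\{f(x_k)-f^*:\ k=0,1,\dots,N\}\le\frac{c}{\sqrt{\underline\beta(N+1)}}\,\|x_0-x_*\|.$$
   Context: Problem: minimize a convex $f:\mathbb{R}^n\to\mathbb{R}$ over a nonempty closed convex $C\subset\mathbb{R}^n$; $f^*:=\inf_{x\in C}f(x)$, $\Omega^*$ the set of minimizers. For $\epsilon\ge0$, $\partial_\epsilon f(x):=\{s: f(y)\ge f(x)+\langle s,y-x\rangle-\epsilon\ \forall y\}$. Relative error tolerance function: any $\varphi_{\gamma,\theta,\lambda}:(\mathbb{R}^n)^3\to[0,\infty)$ with $\varphi_{\gamma,\theta,\lambda}(u,v,w)\le\gamma\|v-u\|^2+\theta\|w-v\|^2+\lambda\|w-u\|^2$; for $u\in C$, $\mathcal{P}_C(\varphi_{\gamma,\theta,\lambda},u,v):=\{w\in C:\langle v-w,z-w\rangle\le\varphi_{\gamma,\theta,\lambda}(u,v,w)\ \forall z\in C\}$. Subgradient-InexP method: $x_0\in C$; at iteration $k$, if $0\in\partial f(x_k)$ stop; otherwise choose nonzero $s_k\in\partial_{\epsilon_k}f(x_k)$, stepsize $t_k>0$, and $x_{k+1}\in\mathcal{P}_C(\varphi_{\gamma_k,\theta_k,\lambda_k},x_k,x_k-t_ks_k)$. Standing assumptions: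 $\gamma_k\in[0,\bar\gamma)$, $\theta_k\in[0,\bar\theta)$, $\lambda_k\in[0,\bar\lambda)$ with $\bar\gamma\ge0$, $\bar\theta,\bar\lambda\in[0,1/2)$; the sequence is infinite. Let $\nu:=\frac{1+2\bar\gamma}{1-2\bar\lambda}$. Polyak's stepsize rule: $\Omega^*\neq\varnothing$, $f^*>-\infty$ known; $\mu\ge0$, $\underline\beta>0$, $\bar\beta>0$; $\{\epsilon_k\}$ nonincreasing, $0<\underline\beta\le\beta_k\le\bar\beta<\frac{1}{2\mu+\nu}$ and $0<\epsilon_k\le\mu\beta_k[f(x_k)-f^*]$ for all $k$; $t_k:=\beta_k\frac{f(x_k)-f^*}{\|s_k\|^2}$. *)

(* Defs.v *)
From HB Require Import structures.
From mathcomp Require Import all_boot all_order all_algebra.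
From mathcomp Require Import all_classical all_reals.
Set Implicit Arguments. Unset Strict Implicit. Unset Printing Implicit Defensive.
Import Order.TTheory GRing.Theory Num.Theory.
Local Open Scope ring_scope.

Section Defs.
Variables (R : realType) (n : nat).
Notation vec := 'rV[R]_n.

Definition dotv (u v : vec) : R := \sum_(i < n) u ord0 i * v ord0 i.
Definition enorm (u : vec) : R := Num.sqrt (dotv u u).

Definition convex_fun (f : vec -> R) : Prop :=
  forall (x y : vec) (t : R), 0 <= t <= 1 ->
    f (t *: x + (1 - t) *: y) <= t * f x + (1 - t) * f y.

Definition convex_set (C : set vec) : Prop :=
  forall (x y : vec) (t : R), C x -> C y -> 0 <= t <= 1 ->
    C (t *: x + (1 - t) *: y).

Definition eps_subgrad (f : vec -> R) (eps : R) (x s : vec) : Prop :=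
  forall y : vec, f x + dotv s (y - x) - eps <= f y.

Definition inexact_proj (C : set vec) (phi : vec -> vec -> vec -> R)
    (u v w : vec) : Prop :=
  C w /\ forall z : vec, C z -> dotv (v - w) (z - w) <= phi u v w.

Definition rel_err_tol (phi : vec -> vec -> vec -> R) (g th l : R) : Prop :=
  forall u v w : vec, 0 <= phi u v w /\
    phi u v w <= g * enorm (v - u) ^+ 2 + th * enorm (w - v) ^+ 2
                 + l * enorm (w - u) ^+ 2.

Definition seq_cvg_to (u : nat -> vec) (l : vec) : Prop :=
  forall e : R, 0 < e -> exists K : nat, forall k : nat, (K <= k)%N ->
    enorm (u k - l) < e.

(* closed set (sequential closedness, equivalent to topological closedness in R^n) *)
Definition closed_set (C : set vec) : Prop :=
  forall (u : nat -> vec) (l : vec), (forall k, C (u k)) -> seq_cvg_to u l -> C l.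

End Defs.

(* Main.v *)
Require Import Defs.
From HB Require Import structures.
From mathcomp Require Import all_boot all_order all_algebra.
From mathcomp Require Import all_classical all_reals.
From mathcomp Require Import ring lra.
Import Order.TTheory GRing.Theory Num.Theory.
Local Open Scope ring_scope.

Section Aux.
Variables (R : realType) (n : nat).
Notation vec := 'rV[R]_n.
Implicit Types u v w z : vec.

Lemma dotvDl u v w : dotv (u + v) w = dotv u w + dotv v w.
Proof. rewrite /dotv -big_split; apply: eq_bigr => i _; by rewrite !mxE mulrDl. Qed.
Lemma dotvC u v : dotv u v = dotv v u.
Proof. rewrite /dotv; apply: eq_bigr => i _; ring. Qed.
Lemma dotvDr u v w : dotv w (u + v) = dotv w u + dotv w v.
Proof. by rewrite dotvC dotvDl dotvC (dotvC v). Qed.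
Lemma dotvNl u v : dotv (- u) v = - dotv u v.
Proof. rewrite /dotv -sumrN; apply: eq_bigr => i _; rewrite !mxE; ring. Qed.
Lemma dotvNr u v : dotv v (- u) = - dotv v u.
Proof. by rewrite dotvC dotvNl dotvC. Qed.
Lemma dotvZl a u v : dotv (a *: u) v = a * dotv u v.
Proof. rewrite /dotv mulr_sumr; apply: eq_bigr => i _; rewrite !mxE; ring. Qed.
Lemma dotv_ge0 u : 0 <= dotv u u.
Proof. rewrite /dotv; apply: sumr_ge0 => i _; by rewrite -expr2 sqr_ge0. Qed.
Lemma enorm_sq u : enorm u ^+ 2 = dotv u u.
Proof. by rewrite /enorm sqr_sqrtr // dotv_ge0. Qed.
Lemma enorm_ge0 u : 0 <= enorm u.
Proof. exact: sqrtr_ge0. Qed.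
Lemma dotv_gt0 u : u != 0 -> 0 < dotv u u.
Proof.
move=> hu; rewrite lt_def dotv_ge0 andbT; apply/negP => /eqP h.
move/negP: hu; apply; apply/eqP/rowP => i; rewrite mxE.
have hF : forall j : 'I_n, predT j -> 0 <= u ord0 j * u ord0 j.
  by move=> j _; rewrite -expr2 sqr_ge0.
have /eqP := psumr_eq0P hF h (i := i) isT.
by rewrite mulf_eq0 orbb => /eqP ->.
Qed.
End Aux.
Arguments dotvC {R n}. Arguments dotvDl {R n}. Arguments dotvDr {R n}. Arguments dotvNl {R n}. Arguments dotvNr {R n}. Arguments dotvZl {R n}. Arguments dotv_ge0 {R n}. Arguments enorm_sq {R n}. Arguments enorm_ge0 {R n}. Arguments dotv_gt0 {R n}.

Lemma proj_step (R : realType) (n : nat) (u v w z : 'rV[R]_n) (phi g th l : R) :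
  dotv (v - w) (z - w) <= phi -> dotv (v - w) (u - w) <= phi ->
  phi <= g * dotv (v - u) (v - u) + th * dotv (w - v) (w - v)
         + l * dotv (w - u) (w - u) ->
  0 <= th < 1/2 -> 0 <= l < 1/2 ->
  (1 - 2 * l) * dotv (w - z) (w - z) <=
  (1 - 2 * l) * (dotv (u - z) (u - z) + 2 * dotv (v - u) (u - z))
   + (1 + 2 * g) * dotv (v - u) (v - u).
Proof.
move=> hP hQ hB /andP[th0 th1] /andP[l0 l1].
have A2 : 0 <= dotv (w - v) (w - v) by apply: dotv_ge0.
have h1 : 0 <= (1 - 2 * l) * (phi - dotv (v - w) (z - w)).
  by apply: mulr_ge0; lra.
have h2 : 0 <= l * (phi - dotv (v - w) (u - w)).
  by apply: mulr_ge0; lra.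
have h3 : 0 <= (1 - 2 * th) * dotv (w - v) (w - v).
  by apply: mulr_ge0; lra.
rewrite !(dotvDl, dotvDr, dotvNl, dotvNr) in hB h1 h2 h3 *.
have s1 := dotvC u v; have s2 := dotvC u w; have s3 := dotvC u z.
have s4 := dotvC v w; have s5 := dotvC v z; have s6 := dotvC w z.
nra.
Qed.

Lemma scal (R : realType) (Dw Du Sz S2 t F eps mu beta blow c nu g l : R) :
  (1 - 2 * l) * Dw <= (1 - 2 * l) * (Du - 2 * (t * Sz)) + (1 + 2 * g) * (t * (t * S2)) ->
  0 <= l < 1/2 -> 0 <= g -> 1 + 2 * g <= nu * (1 - 2 * l) ->
  F - eps <= Sz -> eps <= mu * beta * F -> 0 <= t -> t * S2 = beta * F ->
  0 <= mu -> beta * (2 * mu + nu) <= 1 -> 0 <= F -> 0 < blow -> blow <= beta ->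
  0 < S2 -> S2 <= c ^+ 2 -> 0 < c ->
  Dw <= Du - blow / c ^+ 2 * F ^+ 2.
Proof.
move=> H /andP[l0 l1] g0 hnu hS he t0 htS mu0 hb F0 bl0 hbl S0 Sc c0.
have tt0 : 0 <= t * (t * S2) by rewrite !mulr_ge0 // ltW.
have h1 : Dw <= Du - 2 * (t * Sz) + nu * (t * (t * S2)).
  have h : (1 + 2 * g) * (t * (t * S2)) <= nu * (1 - 2 * l) * (t * (t * S2)).
    by apply: ler_wpM2r.
  have hl : 0 < 1 - 2 * l by lra.
  rewrite -(ler_pM2l hl); nra.
have h2 : t * Sz >= t * (F - eps) by apply: ler_wpM2l.
have h3 : t * eps <= t * (mu * beta * F) by apply: ler_wpM2l.
have tF0 : 0 <= t * F by apply: mulr_ge0.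
have h4 : t * F * (beta * (2 * mu + nu)) <= t * F by rewrite ler_piMr.
have h5 : Dw <= Du - t * F.
  rewrite htS in h1; nra.
have h6 : blow * F ^+ 2 <= t * F * c ^+ 2.
  have : blow * F ^+ 2 <= beta * F * F by rewrite expr2 mulrA ler_wpM2r // ler_wpM2r.
  rewrite -htS => h7; apply: (le_trans h7).
  have : t * S2 * F <= t * c ^+ 2 * F by rewrite ler_wpM2r // ler_wpM2l.
  lra.
have h8 : blow / c ^+ 2 * F ^+ 2 <= t * F.
  rewrite mulrAC ler_pdivrMr ?exprn_gt0 //.
lra.
Qed.

Lemma fin1 (R : realType) (M c e N1 blow s : R) :
  0 < M -> 0 < c -> 0 <= e -> 0 < blow -> 0 < N1 -> 0 < s -> s ^+ 2 = blow * N1 ->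
  N1 * (blow / c ^+ 2 * M ^+ 2) <= e ^+ 2 -> M <= c / s * e.
Proof.
move=> M0 c0 e0 b0 N0 s0 hs h.
have c2 : 0 < c ^+ 2 by rewrite exprn_gt0.
have h2 : (M * s) ^+ 2 <= (c * e) ^+ 2.
  have := ler_wpM2l (ltW c2) h.
  have -> : c ^+ 2 * (N1 * (blow / c ^+ 2 * M ^+ 2)) = (M * s) ^+ 2.
    rewrite exprMn hs; field; exact: lt0r_neq0.
  by rewrite [(c * e) ^+ 2]exprMn.
rewrite mulrAC ler_pdivlMr //.
rewrite -ler_sqr // qualifE /=; apply: mulr_ge0 => //; exact: ltW.
Qed.

Lemma my_bigmin_seq_le (R : realType) (I : eqType) (r : seq I) (G : I -> R) (idx : R) (k : I) :
  k \in r -> \big[Num.min/idx]_(i <- r) G i <= G k.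
Proof.
elim: r => [//|a r IH]; rewrite inE big_cons /= => /orP[/eqP ->|hk].
  by rewrite ge_min lexx.
by rewrite ge_min IH ?orbT.
Qed.

Lemma my_bigmin_le (R : realType) (G : nat -> R) (N : nat) (k : 'I_N.+1) :
  \big[Num.min/G 0%N]_(i < N.+1) G i <= G k.
Proof. exact: (my_bigmin_seq_le R _ _ (fun i : 'I_N.+1 => G i) (G 0%N) _ (mem_index_enum k)). Qed.

Local Open Scope classical_set_scope.

Theorem mainTheorem9 (R : realType) (n : nat)
  (f : 'rV[R]_n -> R) (C : set 'rV[R]_n) (fstar : R) (xstar : 'rV[R]_n)
  (x s : nat -> 'rV[R]_n) (eps t beta gam th lam : nat -> R)
  (phi : nat -> 'rV[R]_n -> 'rV[R]_n -> 'rV[R]_n -> R)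
  (gbar thbar lbar mu blow bbar c : R) :
  (* problem data *)
  convex_fun f ->
  C !=set0 -> closed_set C -> convex_set C ->
  (* fstar = inf_{x in C} f x, and Omega* nonempty *)
  (forall y, C y -> fstar <= f y) ->
  (exists y, C y /\ f y = fstar) ->
  (* parameters of the tolerance functions *)
  0 <= gbar -> 0 <= thbar < 1/2 -> 0 <= lbar < 1/2 ->
  (forall k, 0 <= gam k < gbar) ->
  (forall k, 0 <= th k < thbar) ->
  (forall k, 0 <= lam k < lbar) ->
  (forall k, rel_err_tol (phi k) (gam k) (th k) (lam k)) ->
  (* Polyak's stepsize rule *)
  0 <= mu -> 0 < blow -> 0 < bbar ->
  (forall k, eps k.+1 <= eps k) ->
  (forall k, blow <= beta k <= bbar) ->
  bbar < 1 / (2 * mu + (1 + 2 * gbar) / (1 - 2 * lbar)) ->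
  (forall k, 0 < eps k <= mu * beta k * (f (x k) - fstar)) ->
  (forall k, t k = beta k * (f (x k) - fstar) / enorm (s k) ^+ 2) ->
  (* Subgradient-InexP iterations; the sequence is infinite *)
  C (x 0%N) ->
  (forall k, ~ (eps_subgrad f 0 (x k) 0)) ->
  (forall k, s k != 0 /\ eps_subgrad f (eps k) (x k) (s k)) ->
  (forall k, inexact_proj C (phi k) (x k) (x k - t k *: s k) (x k.+1)) ->
  (* convergence to a solution *)
  C xstar -> f xstar = fstar ->
  seq_cvg_to x xstar ->
  0 < c -> (forall k, enorm (s k) <= c) ->
  forall N : nat,
    \big[Num.min/(f (x 0%N) - fstar)]_(k < N.+1) (f (x k) - fstar)
      <= c / Num.sqrt (blow * N.+1%:R) * enorm (x 0%N - xstar).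
Proof.
move=> _ _ _ _ hfs _ g0 /andP[thb0 thb1] /andP[lb0 lb1] hg hth hl hphi mu0 bl0 bb0 _
  hbeta hbb heps ht Cx0 _ hs hproj Cxs fxs _ c0 hsc N.
Local Open Scope ring_scope.
set F := fun k => f (x k) - fstar.
set D := fun k => dotv (x k - xstar) (x k - xstar).
have hC : forall k, C (x k).
  by elim=> [//|k _]; case: (hproj k).
have hF : forall k, 0 < F k.
  move=> k; have := hfs _ (hC k); have := heps k; case/andP => e0 e1.
  have := hbeta k; case/andP => b0 b1.
  rewrite /F => h; rewrite ltNge; apply/negP => hle.
  have e : f (x k) - fstar = 0 by lra.
  by move: e1; rewrite e mulr0; lra.
set nu := (1 + 2 * gbar) / (1 - 2 * lbar).
have lbp : 0 < 1 - 2 * lbar by lra.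
have nuE : nu * (1 - 2 * lbar) = 1 + 2 * gbar by rewrite /nu divfK // gt_eqF.
have nu0 : 0 < nu by rewrite /nu divr_gt0 //; lra.
have hbn : bbar * (2 * mu + nu) <= 1.
  have p : 0 < 2 * mu + nu by lra.
  by move: hbb; rewrite ltr_pdivlMr // => /ltW.
have step : forall k, D k.+1 <= D k - blow / c ^+ 2 * F k ^+ 2.
  move=> k.
  case: (hproj k) => _ hz.
  have [l0 l1] : 0 <= lam k /\ lam k < 1/2 by case/andP: (hl k) => ? ?; lra.
  have [t0 t1] : 0 <= th k /\ th k < 1/2 by case/andP: (hth k) => ? ?; lra.
  have [gg0 gg1] : 0 <= gam k /\ gam k < gbar by case/andP: (hg k).
  have [_ hB] := hphi k (x k) (x k - t k *: s k) (x k.+1).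
  rewrite !enorm_sq in hB.
  have := (@proj_step _ _ _ _ _ _ _ _ _ _) (hz _ Cxs) (hz _ (hC k)) hB.
  rewrite t0 t1 l0 l1 => /(_ isT isT).
  have ev : x k - t k *: s k - x k = - (t k *: s k).
    by apply/rowP => i; rewrite !mxE; ring.
  rewrite ev !(dotvNl, dotvNr, dotvZl) !mulrN opprK.
  rewrite (dotvC (s k) (t k *: s k)) dotvZl => H.
  have [sn0 hsub] := hs k.
  have S0 := dotv_gt0 _ sn0.
  have hsz := hsub xstar.
  have hsz' : F k - eps k <= dotv (s k) (x k - xstar).
    move: hsz; rewrite fxs /F !(dotvDr, dotvNr); lra.
  have [e0 e1] : 0 < eps k /\ eps k <= mu * beta k * F k by case/andP: (heps k).
  have [b0 b1] : blow <= beta k /\ beta k <= bbar by case/andP: (hbeta k).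
  have htk : t k = beta k * F k / dotv (s k) (s k) by rewrite ht enorm_sq.
  have tpos : 0 <= t k.
    rewrite htk divr_ge0 ?mulr_ge0 ?(ltW (hF k)) ?(ltW S0) //; lra.
  have htS : t k * dotv (s k) (s k) = beta k * F k by rewrite htk divfK // gt_eqF.
  have hnuk : 1 + 2 * gam k <= nu * (1 - 2 * lam k).
    have : nu * (1 - 2 * lbar) <= nu * (1 - 2 * lam k) by apply: ler_wpM2l; [exact: ltW | case/andP: (hl k) => ? ?; lra].
    lra.
  have hbk : beta k * (2 * mu + nu) <= 1.
    apply: le_trans hbn; apply: ler_wpM2r => //; lra.
  have Sc : dotv (s k) (s k) <= c ^+ 2.
    rewrite -enorm_sq; have := hsc k; have := enorm_ge0 (s k); nra.
  have l01 : 0 <= lam k < 1/2 by rewrite l0 l1.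
  have HH := (@scal R _ _ _ _ _ _ _ _ _ _ _ _ _ _ H l01 gg0 hnuk hsz' e1 tpos htS mu0 hbk (ltW (hF k)) bl0 b0 S0 Sc c0). by move: HH; rewrite /D /F.
have tele : forall K, D K + \sum_(k < K) (blow / c ^+ 2 * F k ^+ 2) <= D 0%N.
  elim=> [|K IH]; first by rewrite big_ord0 addr0.
  rewrite big_ord_recr /=; apply: le_trans IH.
  have := step K; lra.
set M := \big[Num.min/(f (x 0%N) - fstar)]_(k < N.+1) (f (x k) - fstar).
have Mle : forall k : 'I_N.+1, M <= F k.
  by move=> k; rewrite /M /F; exact: (my_bigmin_le R (fun i => f (x i) - fstar)).
have M0 : 0 < M.
  rewrite /M; apply: (big_ind (fun v => 0 < v)); first exact: (hF 0%N).
    by move=> a b ha hb; rewrite lt_min ha hb.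
  by move=> k _; exact: (hF k).
have hsum : N.+1%:R * (blow / c ^+ 2 * M ^+ 2) <= D 0%N.
  apply: le_trans (tele N.+1).
  have DN : 0 <= D N.+1 by exact: dotv_ge0.
  suff : N.+1%:R * (blow / c ^+ 2 * M ^+ 2) <= \sum_(k < N.+1) (blow / c ^+ 2 * F k ^+ 2) by lra.
  have hc : \sum_(k < N.+1) (blow / c ^+ 2 * M ^+ 2) = N.+1%:R * (blow / c ^+ 2 * M ^+ 2).
    by rewrite sumr_const card_ord mulr_natl.
  rewrite -hc.
  apply: ler_sum => k _; apply: ler_wpM2l.
    by rewrite divr_ge0 ?exprn_ge0 ?ltW.
  by rewrite !expr2; apply: ler_pM; [exact: ltW | exact: ltW | exact: Mle | exact: Mle].
have bN : 0 < blow * N.+1%:R by rewrite mulr_gt0 ?ltr0Sn.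
apply: (fin1 R _ _ _ _ _ _ M0 c0 (enorm_ge0 _) bl0 (ltr0Sn _ N) _ (sqr_sqrtr (ltW bN))).
  by rewrite sqrtr_gt0.
by rewrite enorm_sq.
Qed.
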